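(* An $\mathcal R$-module $\mathbb M$ is dually separated if and only if for every $R$-module $N$ and every morphism of $\mathcal R$-modules $f\colon\mathbb M\to\mathcal N$, the cokernel $\operatorname{Coker} f$ (computed objectwise, $(\operatorname{Coker} f)(S)=\operatorname{Coker} f_S$) is quasi-coherent, i.e. it coincides with the quasi-coherent module associated with the $R$-module $\operatorname{Coker}(f_R\colon\mathbb M(R)\to N)$.
   Context: $R$ is a commutative ring. An $\mathcal R$-module is a covariant functor $\mathbb M$ from commutative $R$-algebras to abelian groups with each $\mathbb M(S)$ an $S$-module, functorially; morphisms are natural transformations that are $S$-linear on each $S$. For an $R$-module $N$, the quasi-coherent $\mathcal R$-module $\mathcal N$ is $\mathcal N(S)=N\otimes_R S$. $\mathbb M^*(S)=\operatorname{Hom}_{\mathcal S}(\mathbb M_{|S},\mathcal S)$ where $\mathbb M_{|S}$ is restriction to $S$-algebras. $\mathbb M$ is dually separated if for every commutative $R$-algebra $S$ the map $\mathbb M^*(S)\to\operatorname{Hom}_R(\mathbb M(R),S)$, $w\mapsto w_R$, is injective. *)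

(* Defs.v *)
From HB Require Import structures.
From mathcomp Require Import all_boot all_order all_algebra.
Set Implicit Arguments. Unset Strict Implicit. Unset Printing Implicit Defensive.
Import GRing.Theory.
Local Open Scope ring_scope.

Record ralg (R : comPzRingType) := RAlg {
  ralg_car :> comPzRingType;
  ralg_str : {rmorphism R -> ralg_car} }.

Record ralg_hom (R : comPzRingType) (S T : ralg R) := RAlgHom {
  rah_fun :> {rmorphism S -> T};
  rah_str : forall r : R, rah_fun (ralg_str S r) = ralg_str T r }.

Definition ralgR (R : comPzRingType) : ralg R := @RAlg R R idfun.

Definition str_hom (R : comPzRingType) (S : ralg R) : ralg_hom (ralgR R) S :=
  @RAlgHom R (ralgR R) S (ralg_str S) (fun r => erefl).

Definition id_hom (R : comPzRingType) (S : ralg R) : ralg_hom S S :=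
  @RAlgHom R S S idfun (fun r => erefl).

(* An R-module (in the sense of the paper): a functor from commutative
   R-algebras to abelian groups, M(S) an S-module, functorial maps
   additive and semilinear over the algebra morphism. *)
Record rmodule (R : comPzRingType) := RModule {
  rm_obj : forall S : ralg R, lmodType S;
  rm_map : forall (S T : ralg R), ralg_hom S T -> rm_obj S -> rm_obj T;
  rm_add : forall (S T : ralg R) (g : ralg_hom S T) (x y : rm_obj S),
      rm_map g (x + y) = rm_map g x + rm_map g y;
  rm_scale : forall (S T : ralg R) (g : ralg_hom S T) (s : S) (x : rm_obj S),
      rm_map g (s *: x) = g s *: rm_map g x;
  rm_id : forall (S : ralg R) (g : ralg_hom S S),
      (forall s, g s = s) -> forall x, rm_map g x = x;
  rm_comp : forall (S T U : ralg R) (g : ralg_hom S T) (h : ralg_hom T U)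
      (k : ralg_hom S U), (forall s, k s = h (g s)) ->
      forall x, rm_map k x = rm_map h (rm_map g x) }.
Arguments rm_obj {R} r S : rename.
Arguments rm_map {R} r {S T} _ _ : rename.

Record rmorph (R : comPzRingType) (M N : rmodule R) := RMorph {
  rmor :> forall S : ralg R, rm_obj M S -> rm_obj N S;
  rmor_add : forall (S : ralg R) (x y : rm_obj M S), rmor (x + y) = rmor x + rmor y;
  rmor_scale : forall (S : ralg R) (s : S) (x : rm_obj M S), rmor (s *: x) = s *: rmor x;
  rmor_nat : forall (S T : ralg R) (g : ralg_hom S T) (x : rm_obj M S),
      rmor (rm_map M g x) = rm_map N g (rmor x) }.

(* Elements of M^*(S) = Hom_S(M_|S, S-cal).  An S-algebra is represented
   as an R-algebra T together with an R-algebra morphism u : S -> T;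
   S-cal(T) = S (x)_S T = T. *)
Record dual_elt (R : comPzRingType) (M : rmodule R) (S : ralg R) := DualElt {
  dw : forall (T : ralg R), ralg_hom S T -> rm_obj M T -> T;
  dw_add : forall (T : ralg R) (u : ralg_hom S T) (x y : rm_obj M T),
      dw u (x + y) = dw u x + dw u y;
  dw_scale : forall (T : ralg R) (u : ralg_hom S T) (t : T) (x : rm_obj M T),
      dw u (t *: x) = t * dw u x;
  dw_nat : forall (T T' : ralg R) (u : ralg_hom S T) (u' : ralg_hom S T')
      (g : ralg_hom T T'), (forall s, g (u s) = u' s) ->
      forall x, dw u' (rm_map M g x) = g (dw u x) }.

Definition dual_res (R : comPzRingType) (M : rmodule R) (S : ralg R)
  (w : dual_elt M S) (m : rm_obj M (ralgR R)) : S :=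
  dw w (id_hom S) (rm_map M (str_hom S) m).

Definition dually_separated (R : comPzRingType) (M : rmodule R) : Prop :=
  forall (S : ralg R) (w w' : dual_elt M S),
    (forall m, dual_res w m = dual_res w' m) ->
    forall (T : ralg R) (u : ralg_hom S T) (x : rm_obj M T), dw w u x = dw w' u x.

(* The canonical map M(R) -> M(S) exhibits M(S) as M(R) (x)_R S
   (universal property of extension of scalars). *)
Definition qc_at (R : comPzRingType) (M : rmodule R) (S : ralg R) : Prop :=
  forall (P : lmodType S) (phi : rm_obj M (ralgR R) -> P),
    (forall x y, phi (x + y) = phi x + phi y) ->
    (forall (r : R) x, phi (r *: x) = ralg_str S r *: phi x) ->
    exists psi : rm_obj M S -> P,
      [/\ (forall x y, psi (x + y) = psi x + psi y),
          (forall (s : S) x, psi (s *: x) = s *: psi x),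
          (forall m, psi (rm_map M (str_hom S) m) = phi m) &
          (forall psi' : rm_obj M S -> P,
              (forall x y, psi' (x + y) = psi' x + psi' y) ->
              (forall (s : S) x, psi' (s *: x) = s *: psi' x) ->
              (forall m, psi' (rm_map M (str_hom S) m) = phi m) ->
              forall x, psi' x = psi x)].

Definition quasi_coherent (R : comPzRingType) (M : rmodule R) : Prop :=
  forall S : ralg R, qc_at M S.

Definition is_coker (R : comPzRingType) (M N C : rmodule R)
  (f : rmorph M N) (p : rmorph N C) : Prop :=
  forall S : ralg R,
    (forall y : rm_obj C S, exists x, p S x = y) /\
    (forall x : rm_obj N S, p S x = 0 <-> exists m, f S m = x).

(* Main.v *)
Require Import Defs.
From HB Require Import structures.
From mathcomp Require Import all_boot all_order all_algebra.
From Stdlib Require Import ClassicalEpsilon FunctionalExtensionality PropExtensionality ProofIrrelevance.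
Set Implicit Arguments. Unset Strict Implicit. Unset Printing Implicit Defensive.
Import GRing.Theory.
Local Open Scope ring_scope.

Record eqv (X : Type) := Eqv { erel :> X -> X -> Prop;
  erR : forall x, erel x x; erS : forall x y, erel x y -> erel y x;
  erT : forall x y z, erel x y -> erel y z -> erel x z }.

Section Quot.
Variables (X : choiceType) (e : eqv X).

Definition qrepr (x : X) : X := epsilon (inhabits x) (e x).

Record quot := Quot { qval : X; qvalP : qrepr qval == qval }.
HB.instance Definition _ := [isSub for qval].
HB.instance Definition _ := [Choice of quot by <:].

Let eR := @erR _ e. Let eS := @erS _ e. Let eT := @erT _ e.

Lemma qrepr_spec x : e x (qrepr x).
Proof. exact: (epsilon_spec (inhabits x) (e x) (ex_intro _ x (eR x))). Qed.

Lemma qrepr_eq x y : e x y -> qrepr x = qrepr y.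
Proof.
move=> exy; have E : e x = e y.
  apply: functional_extensionality => z; apply: propositional_extensionality.
  by split => h; [apply: eT (eS exy) h | apply: eT exy h].
rewrite /qrepr E; congr epsilon; exact: proof_irrelevance.
Qed.

Lemma pi_subproof x : qrepr (qrepr x) == qrepr x.
Proof. by apply/eqP; apply: qrepr_eq; apply: eS; apply: qrepr_spec. Qed.

Definition qpi x : quot := Quot (pi_subproof x).

Lemma qpiP x y : qpi x = qpi y <-> e x y.
Proof.
split => [h|h]; last by apply: val_inj; rewrite /= (qrepr_eq h).
have : qrepr x = qrepr y by move: (congr1 qval h).
move=> E; apply: eT (qrepr_spec x) _; rewrite E; apply: eS; exact: qrepr_spec.
Qed.

Lemma qvK q : qpi (qval q) = q.
Proof. by apply: val_inj => /=; apply/eqP; case: q. Qed.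

Lemma qvpi x : e x (qval (qpi x)).
Proof. exact: qrepr_spec. Qed.

Lemma qq_ind (P : quot -> Prop) : (forall x, P (qpi x)) -> forall q, P q.
Proof. by move=> h q; rewrite -(qvK q). Qed.
End Quot.

Record submod (A : pzRingType) (V : lmodType A) := SubMod {
  smem : V -> Prop;
  sm0 : smem 0;
  smD : forall x y, smem x -> smem y -> smem (x + y);
  smZ : forall a x, smem x -> smem (a *: x) }.

Section QMod.
Variables (A : pzRingType) (V : lmodType A) (W : submod V).
Definition qe (x y : V) := smem W (x - y).
Lemma qeR x : qe x x. Proof. by rewrite /qe subrr; apply: sm0. Qed.
Lemma qeS x y : qe x y -> qe y x.
Proof. by move=> h; rewrite /qe -opprB -scaleN1r; apply: smZ. Qed.
Lemma qeT x y z : qe x y -> qe y z -> qe x z.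
Proof. by move=> h1 h2; rewrite /qe -(subrKA y); apply: smD. Qed.
Lemma qeD x x' y y' : qe x x' -> qe y y' -> qe (x + y) (x' + y').
Proof. by move=> h1 h2; rewrite /qe opprD addrACA; apply: smD. Qed.
Lemma qeZ a x x' : qe x x' -> qe (a *: x) (a *: x').
Proof. by move=> h; rewrite /qe -scalerBr; apply: smZ. Qed.

Definition qeqv := Eqv qeR qeS qeT.
Definition qmod := quot qeqv.
HB.instance Definition _ := Choice.on qmod.
Local Notation pq := (@qpi _ qeqv : V -> qmod).
Definition qadd (a b : qmod) : qmod := pq (qval a + qval b).
Definition qscale (c : A) (a : qmod) : qmod := pq (c *: qval a).
Definition qopp (a : qmod) : qmod := qscale (-1) a.
Definition qzero : qmod := pq 0.

Lemma pqE x y : pq x = pq y <-> qe x y.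
Proof. exact: qpiP. Qed.
Lemma qv x : qe (qval (pq x)) x.
Proof. apply: qeS; exact: (qvpi qeqv x). Qed.
Lemma qaddE x y : qadd (pq x) (pq y) = pq (x + y).
Proof. by apply/pqE; apply: qeD; apply: qv. Qed.
Lemma qscaleE c x : qscale c (pq x) = pq (c *: x).
Proof. by apply/pqE; apply: qeZ; apply: qv. Qed.
Lemma qind (P : qmod -> Prop) : (forall x, P (pq x)) -> forall q, P q.
Proof. exact: qq_ind. Qed.

Lemma qaddA : associative qadd.
Proof. by elim/qind=> x; elim/qind=> y; elim/qind=> z; rewrite !qaddE addrA. Qed.
Lemma qaddC : commutative qadd.
Proof. by elim/qind=> x; elim/qind=> y; rewrite !qaddE addrC. Qed.
Lemma qadd0 : left_id qzero qadd.
Proof. by elim/qind=> x; rewrite qaddE add0r. Qed.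
Lemma qaddN : left_inverse qzero qopp qadd.
Proof. by elim/qind=> x; rewrite /qopp qscaleE qaddE scaleN1r addNr. Qed.
HB.instance Definition _ := GRing.isZmodule.Build qmod qaddA qaddC qadd0 qaddN.

Lemma qscaleA a b v : qscale a (qscale b v) = qscale (a * b) v.
Proof. by elim/qind: v => x; rewrite !qscaleE scalerA. Qed.
Lemma qscale1 : left_id 1 qscale.
Proof. by elim/qind=> x; rewrite qscaleE scale1r. Qed.
Lemma qscaleDr : right_distributive qscale +%R.
Proof.
move=> a; elim/qind=> x; elim/qind=> y.
have -> : pq x + pq y = qadd (pq x) (pq y) by [].
have -> : qscale a (pq x) + qscale a (pq y) = qadd (qscale a (pq x)) (qscale a (pq y)) by [].
by rewrite qaddE !qscaleE qaddE scalerDr.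
Qed.
Lemma qscaleDl v : {morph qscale^~ v : a b / a + b}.
Proof.
elim/qind: v => x a b.
have -> : qscale a (pq x) + qscale b (pq x) = qadd (qscale a (pq x)) (qscale b (pq x)) by [].
by rewrite !qscaleE qaddE scalerDl.
Qed.
HB.instance Definition _ := GRing.Zmodule_isLmodule.Build A qmod qscaleA qscale1 qscaleDr qscaleDl.

Definition qproj (x : V) : qmod := pq x.
Lemma qprojD x y : qproj (x + y) = qproj x + qproj y.
Proof. by rewrite /qproj -qaddE. Qed.
Lemma qprojZ c x : qproj (c *: x) = c *: qproj x.
Proof. by rewrite /qproj -qscaleE. Qed.
Lemma qproj_eq0 x : qproj x = 0 <-> smem W x.
Proof. by rewrite /qproj -[0]/(qzero) pqE /qe subr0. Qed.
Lemma qproj_surj (q : qmod) : exists x, qproj x = q.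
Proof. by exists (qval q); rewrite /qproj qvK. Qed.
End QMod.

(* a B-module viewed as an A-module through a ring morphism *)
Definition via (A B : comPzRingType) (g : {rmorphism A -> B}) (P : lmodType B) : Type := P.
Section Via.
Variables (A B : comPzRingType) (g : {rmorphism A -> B}) (P : lmodType B).
HB.instance Definition _ := GRing.Zmodule.on (via g P).
Definition vscale (a : A) (p : via g P) : via g P := g a *: (p : P).
Lemma vscaleA a b v : vscale a (vscale b v) = vscale (a * b) v.
Proof. by rewrite /vscale scalerA rmorphM. Qed.
Lemma vscale1 : left_id 1 vscale.
Proof. by move=> v; rewrite /vscale rmorph1 scale1r. Qed.
Lemma vscaleDr : right_distributive vscale +%R.
Proof. by move=> a x y; rewrite /vscale scalerDr. Qed.
Lemma vscaleDl v : {morph vscale^~ v : a b / a + b}.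
Proof. by move=> a b; rewrite /vscale rmorphD scalerDl. Qed.
HB.instance Definition _ := GRing.Zmodule_isLmodule.Build A (via g P) vscaleA vscale1 vscaleDr vscaleDl.
Lemma viaZ (a : A) (p : via g P) : a *: p = (g a *: (p : P) : P).
Proof. by []. Qed.
End Via.

Section Tensor.
Variables (R : comPzRingType) (S U : ralg R).
Local Notation iS := (ralg_str S).
Local Notation iU := (ralg_str U).

Definition semil (P : lmodType U) (phi : S -> P) :=
  (forall x y, phi (x + y) = phi x + phi y) /\
  (forall r x, phi (iS r * x) = iU r *: phi x).

Lemma semil0 P phi : @semil P phi -> phi 0 = 0.
Proof. by case=> hD _; apply/eqP; rewrite -(addrI (phi 0) (_ : phi 0 + phi 0 = phi 0 + 0)) // -hD !addr0. Qed.
Lemma semilN P phi : @semil P phi -> forall x, phi (- x) = - phi x.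
Proof. move=> h x; apply/eqP; rewrite -addr_eq0 -h.1 addNr; apply/eqP; exact: semil0 h. Qed.

Definition tv (P : lmodType U) (phi : S -> P) (a : seq (S * U)) : P :=
  \sum_(x <- a) x.2 *: phi x.1.

Definition teq (a b : seq (S * U)) :=
  forall (P : lmodType U) (phi : S -> P), semil phi -> tv phi a = tv phi b.

Lemma teqR a : teq a a. Proof. by []. Qed.
Lemma teqS a b : teq a b -> teq b a. Proof. by move=> h P phi hp; rewrite h. Qed.
Lemma teqT a b c : teq a b -> teq b c -> teq a c.
Proof. by move=> h1 h2 P phi hp; rewrite h1 // h2. Qed.
Definition teqv := Eqv teqR teqS teqT.
Definition tensor := quot teqv.
HB.instance Definition _ := Choice.on tensor.
Definition tp (a : seq (S * U)) : tensor := qpi teqv a.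

Lemma tpE a b : tp a = tp b <-> teq a b. Proof. exact: qpiP. Qed.
Lemma tv_qv a : teq (qval (tp a)) a. Proof. apply: teqS; exact: (qvpi teqv a). Qed.
Lemma tind (P : tensor -> Prop) : (forall x, P (tp x)) -> forall q, P q.
Proof. exact: qq_ind. Qed.

Definition tneg (a : seq (S * U)) := [seq (x.1, - x.2) | x <- a].
Definition tmul (a b : seq (S * U)) := [seq (x.1 * y.1, x.2 * y.2) | x <- a, y <- b].
Definition tone : seq (S * U) := [:: (1, 1)].
Definition tsc (c : U) (a : seq (S * U)) := [seq (x.1, c * x.2) | x <- a].

Lemma tv_cat P phi a b : @tv P phi (a ++ b) = tv phi a + tv phi b.
Proof. by rewrite /tv big_cat. Qed.
Lemma tv_neg P phi a : @tv P phi (tneg a) = - tv phi a.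
Proof. by rewrite /tv big_map -sumrN; apply: eq_bigr => x _; rewrite scaleNr. Qed.
Lemma tv_sc P phi c a : @tv P phi (tsc c a) = c *: tv phi a.
Proof. by rewrite /tv big_map scaler_sumr; apply: eq_bigr => x _; rewrite scalerA. Qed.
Lemma tv_mull P phi a b : @tv P phi (tmul a b) =
  \sum_(x <- a) x.2 *: tv (fun s => phi (x.1 * s)) b.
Proof.
rewrite /tv /tmul big_allpairs_dep; apply: eq_bigr => x _.
by rewrite scaler_sumr; apply: eq_bigr => y _; rewrite scalerA.
Qed.
Lemma tv_mulr P phi a b : @tv P phi (tmul a b) =
  \sum_(y <- b) y.2 *: tv (fun s => phi (s * y.1)) a.
Proof.
rewrite /tv /tmul big_allpairs_dep exchange_big; apply: eq_bigr => y _.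
by rewrite scaler_sumr; apply: eq_bigr => x _; rewrite scalerA [y.2 * _]mulrC.
Qed.

Lemma semil_mull P phi (s : S) : @semil P phi -> semil (fun x => phi (s * x)).
Proof. by case=> hD hZ; split=> [x y|r x]; rewrite ?mulrDr ?hD // mulrCA hZ. Qed.
Lemma semil_mulr P phi (s : S) : @semil P phi -> semil (fun x => phi (x * s)).
Proof. by case=> hD hZ; split=> [x y|r x]; rewrite ?mulrDl ?hD // -mulrA hZ. Qed.

Lemma teq_cat a a' b b' : teq a a' -> teq b b' -> teq (a ++ b) (a' ++ b').
Proof. by move=> h1 h2 P phi hp; rewrite !tv_cat h1 // h2. Qed.
Lemma teq_neg a a' : teq a a' -> teq (tneg a) (tneg a').
Proof. by move=> h P phi hp; rewrite !tv_neg h. Qed.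
Lemma teq_sc c a a' : teq a a' -> teq (tsc c a) (tsc c a').
Proof. by move=> h P phi hp; rewrite !tv_sc h. Qed.
Lemma teq_mul a a' b b' : teq a a' -> teq b b' -> teq (tmul a b) (tmul a' b').
Proof.
move=> h1 h2 P phi hp; rewrite tv_mulr.
under eq_bigr => y _ do rewrite (h1 _ _ (semil_mulr _ hp)).
rewrite -tv_mulr tv_mull.
by under eq_bigr => x _ do rewrite (h2 _ _ (semil_mull _ hp)); rewrite -tv_mull.
Qed.

Definition tadd (p q : tensor) : tensor := tp (qval p ++ qval q).
Definition topp (p : tensor) : tensor := tp (tneg (qval p)).
Definition tzero : tensor := tp [::].
Definition tmulq (p q : tensor) : tensor := tp (tmul (qval p) (qval q)).
Definition toneq : tensor := tp tone.
Definition tscq (c : U) (p : tensor) : tensor := tp (tsc c (qval p)).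

Lemma taddE a b : tadd (tp a) (tp b) = tp (a ++ b).
Proof. by apply/tpE; apply: teq_cat; apply: tv_qv. Qed.
Lemma toppE a : topp (tp a) = tp (tneg a).
Proof. by apply/tpE; apply: teq_neg; apply: tv_qv. Qed.
Lemma tmulE a b : tmulq (tp a) (tp b) = tp (tmul a b).
Proof. by apply/tpE; apply: teq_mul; apply: tv_qv. Qed.
Lemma tscE c a : tscq c (tp a) = tp (tsc c a).
Proof. by apply/tpE; apply: teq_sc; apply: tv_qv. Qed.

Lemma taddA : associative tadd.
Proof. by elim/tind=> x; elim/tind=> y; elim/tind=> z; rewrite !taddE catA. Qed.
Lemma taddC : commutative tadd.
Proof.
elim/tind=> x; elim/tind=> y; rewrite !taddE; apply/tpE => P phi hp.
by rewrite !tv_cat addrC.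
Qed.
Lemma tadd0 : left_id tzero tadd.
Proof. by elim/tind=> x; rewrite taddE. Qed.
Lemma taddN : left_inverse tzero topp tadd.
Proof.
elim/tind=> x; rewrite toppE taddE; apply/tpE => P phi hp.
by rewrite tv_cat tv_neg addNr /tv big_nil.
Qed.
HB.instance Definition _ := GRing.isZmodule.Build tensor taddA taddC tadd0 taddN.

Lemma tmulA : associative tmulq.
Proof.
elim/tind=> x; elim/tind=> y; elim/tind=> z; rewrite !tmulE; apply/tpE => P phi hp.
rewrite /tv /tmul !big_allpairs_dep /=.
apply: eq_bigr => a _; rewrite big_allpairs_dep; apply: eq_bigr => b _.
by apply: eq_bigr => t _; rewrite !mulrA.
Qed.
Lemma tmulC : commutative tmulq.
Proof.
elim/tind=> x; elim/tind=> y; rewrite !tmulE; apply/tpE => P phi hp.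
rewrite tv_mull tv_mulr; apply: eq_bigr => u _; congr (_ *: _).
by rewrite /tv; apply: eq_bigr => v _; rewrite mulrC.
Qed.
Lemma tmul1 : left_id toneq tmulq.
Proof.
elim/tind=> x; rewrite /toneq tmulE; apply/tpE => P phi hp.
rewrite tv_mull /tone big_seq1 scale1r /tv; apply: eq_bigr => u _; by rewrite mul1r.
Qed.
Lemma tmulDl : left_distributive tmulq tadd.
Proof.
elim/tind=> x; elim/tind=> y; elim/tind=> z; rewrite taddE !tmulE taddE.
apply/tpE => P phi hp; by rewrite tv_mull big_cat tv_cat !tv_mull.
Qed.
HB.instance Definition _ := GRing.Zmodule_isComPzRing.Build tensor tmulA tmulC tmul1 tmulDl.

Lemma tscA a b v : tscq a (tscq b v) = tscq (a * b) v.
Proof.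
elim/tind: v => x; rewrite !tscE; apply/tpE => P phi hp.
by rewrite !tv_sc scalerA.
Qed.
Lemma tsc1 : left_id 1 tscq.
Proof. by elim/tind=> x; rewrite tscE; apply/tpE => P phi hp; rewrite tv_sc scale1r. Qed.
Lemma tscDr : right_distributive tscq +%R.
Proof.
move=> c; elim/tind=> x; elim/tind=> y.
rewrite -[tp x + tp y]/(tadd _ _) -[tscq c (tp x) + _]/(tadd _ _) taddE !tscE taddE.
by apply/tpE => P phi hp; rewrite !(tv_cat, tv_sc) scalerDr.
Qed.
Lemma tscDl v : {morph tscq^~ v : a b / a + b}.
Proof.
elim/tind: v => x a b; rewrite -[tscq a _ + _]/(tadd _ _) !tscE taddE.
by apply/tpE => P phi hp; rewrite !(tv_cat, tv_sc) scalerDl.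
Qed.
HB.instance Definition _ := GRing.Zmodule_isLmodule.Build U tensor tscA tsc1 tscDr tscDl.

Lemma tpD a b : tp (a ++ b) = tp a + tp b.
Proof. by rewrite -taddE. Qed.
Lemma tpM a b : tp (tmul a b) = tp a * tp b.
Proof. by rewrite -tmulE. Qed.
Lemma tpZ c a : tp (tsc c a) = c *: tp a.
Proof. by rewrite -tscE. Qed.
Lemma tpN a : tp (tneg a) = - tp a.
Proof. by rewrite -toppE. Qed.
Lemma tpB a b : tp (a ++ tneg b) = tp a - tp b.
Proof. by rewrite tpD tpN. Qed.
Lemma tp0 : tp [::] = 0. Proof. by []. Qed.
Lemma tp1 : tp tone = 1. Proof. by []. Qed.

Lemma tp_sum a : tp a = \sum_(x <- a) x.2 *: tp [:: (x.1, 1)].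
Proof.
elim: a => [|x a IH]; first by rewrite big_nil.
rewrite big_cons -IH -[x :: a]/([:: x] ++ a) tpD -tpZ; congr (_ + _).
by apply/tpE => P phi hp; rewrite /tsc /= /tv !big_seq1 mulr1.
Qed.
End Tensor.

Section TensorAlg.
Variables (R : comPzRingType) (S U : ralg R).
Local Notation iS := (ralg_str S).
Local Notation iU := (ralg_str U).
Local Notation tpU := (@tp R S U).

Lemma semilB P phi : @semil R S U P phi -> forall x y, phi (x - y) = phi x - phi y.
Proof. by move=> h x y; rewrite h.1 (semilN h). Qed.

Definition jS (s : S) : tensor S U := tpU [:: (s, 1)].
Definition jU (u : U) : tensor S U := tpU [:: (1, u)].
Definition jR (r : R) : tensor S U := tpU [:: (1, iU r)].

Lemma tv1 P phi (p : S * U) : @tv R S U P phi [:: p] = p.2 *: phi p.1.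
Proof. by rewrite /tv big_seq1. Qed.

Lemma jSB : zmod_morphism jS.
Proof.
move=> x y; rewrite /jS -tpB; apply/tpE => P phi hp.
by rewrite tv_cat tv_neg !tv1 /= (semilB hp) !scale1r.
Qed.
Lemma jSM : monoid_morphism jS.
Proof.
split=> // x y; rewrite /jS -tpM; apply/tpE => P phi hp.
by rewrite /tmul /= mulr1.
Qed.
HB.instance Definition _ := GRing.isZmodMorphism.Build S (tensor S U) jS jSB.
HB.instance Definition _ := GRing.isMonoidMorphism.Build S (tensor S U) jS jSM.

Lemma jUB : zmod_morphism jU.
Proof.
move=> x y; rewrite /jU -tpB; apply/tpE => P phi hp.
by rewrite tv_cat tv_neg !tv1 /= scalerBl.
Qed.
Lemma jUM : monoid_morphism jU.
Proof.
split=> // x y; rewrite /jU -tpM; apply/tpE => P phi hp.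
by rewrite /tmul /= mulr1.
Qed.
HB.instance Definition _ := GRing.isZmodMorphism.Build U (tensor S U) jU jUB.
HB.instance Definition _ := GRing.isMonoidMorphism.Build U (tensor S U) jU jUM.

Lemma jRB : zmod_morphism jR.
Proof. by move=> x y; rewrite /jR rmorphB -[tpU _]/(jU _) rmorphB. Qed.
Lemma jRM : monoid_morphism jR.
Proof.
split; first by rewrite /jR rmorph1.
by move=> x y; rewrite /jR rmorphM -[tpU [:: (1, _)]]/(jU _) rmorphM.
Qed.
HB.instance Definition _ := GRing.isZmodMorphism.Build R (tensor S U) jR jRB.
HB.instance Definition _ := GRing.isMonoidMorphism.Build R (tensor S U) jR jRM.

Definition tensorA : ralg R := @RAlg R (tensor S U) jR.

Lemma jS_str r : jS (iS r) = jR r.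
Proof.
apply/tpE => P phi hp; rewrite !tv1 /= scale1r.
by rewrite -[iS r]mulr1 hp.2.
Qed.
Definition jS_hom : ralg_hom S tensorA := @RAlgHom R S tensorA jS jS_str.
Definition jU_hom : ralg_hom U tensorA := @RAlgHom R U tensorA jU (fun r => erefl).

Lemma tscale_mul (c : U) (q : tensor S U) : c *: q = jU c * q.
Proof.
elim/tind: q => a; rewrite /jU -tpM -[c *: _]/(tscq _ _) tscE.
apply/tpE => P phi hp; rewrite tv_sc tv_mull big_seq1 /=; congr (_ *: _).
by rewrite /tv; apply: eq_bigr => x _; rewrite mul1r.
Qed.
End TensorAlg.

Section TensorMap.
Variables (R : comPzRingType) (S U U' : ralg R) (g : ralg_hom U U').

Definition tmapS (a : seq (S * U)) : seq (S * U') := [seq (x.1, g x.2) | x <- a].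

Lemma semil_via (P : lmodType U') (phi : S -> P) :
  @semil R S U' P phi -> @semil R S U (via (rah_fun g) P) phi.
Proof. by case=> hD hZ; split=> // r x; rewrite hZ viaZ rah_str. Qed.

Lemma tv_via (P : lmodType U') (phi : S -> P) a :
  @tv R S U (via (rah_fun g) P) phi a = @tv R S U' P phi (tmapS a).
Proof. by rewrite /tv big_map. Qed.

Lemma teq_map a b : teq a b -> teq (tmapS a) (tmapS b).
Proof. by move=> h P phi hp; rewrite -!(tv_via (P:=P)) (h _ _ (semil_via hp)). Qed.

Definition tmap (q : tensor S U) : tensor S U' := tp (tmapS (qval q)).
Lemma tmapE a : tmap (tp a) = tp (tmapS a).
Proof. by apply/tpE; apply: teq_map; apply: tv_qv. Qed.

Lemma tmapB : zmod_morphism tmap.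
Proof.
elim/tind=> a; elim/tind=> b; rewrite -tpB !tmapE -tpB; congr tp.
by rewrite /tmapS /tneg map_cat -!map_comp; congr (_ ++ _); apply: eq_map => x /=; rewrite rmorphN.
Qed.
Lemma tmapM : monoid_morphism tmap.
Proof.
split; first by rewrite -tp1 tmapE /tmapS /= rmorph1.
elim/tind=> a; elim/tind=> b; rewrite -tpM !tmapE -tpM; apply/tpE => P phi hp.
rewrite /tv /tmapS /tmul big_map !big_allpairs_dep big_map; apply: eq_bigr => x _.
by rewrite big_map; apply: eq_bigr => y _; rewrite /= rmorphM.
Qed.
HB.instance Definition _ := GRing.isZmodMorphism.Build (tensor S U) (tensor S U') tmap tmapB.
HB.instance Definition _ := GRing.isMonoidMorphism.Build (tensor S U) (tensor S U') tmap tmapM.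


Lemma tmap_str r : tmap (jR S U r) = jR S U' r.
Proof. by rewrite /jR tmapE /tmapS /= rah_str. Qed.
Definition tmap_hom : ralg_hom (tensorA S U) (tensorA S U') :=
  @RAlgHom R (tensorA S U) (tensorA S U') tmap tmap_str.

Lemma tmap_jS s : tmap (jS U s) = jS U' s.
Proof. by rewrite /jS tmapE /tmapS /= rmorph1. Qed.
Lemma tmap_jU u : tmap (jU S u) = jU S (g u).
Proof. by rewrite /jU tmapE. Qed.
Lemma tmapZ (c : U) q : tmap (c *: q) = g c *: tmap q.
Proof. by rewrite !tscale_mul tmapM.2 tmap_jU. Qed.
End TensorMap.

Lemma tmap_id (R : comPzRingType) (S U : ralg R) (g : ralg_hom U U) :
  (forall u, g u = u) -> forall q : tensor S U, tmap g q = q.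
Proof.
move=> h; elim/tind=> a; rewrite tmapE /tmapS; congr tp.
by elim: a => //= [[s u] a ->]; rewrite h.
Qed.

Lemma tmap_comp (R : comPzRingType) (S U U' U'' : ralg R) (g : ralg_hom U U')
  (h : ralg_hom U' U'') (k : ralg_hom U U'') :
  (forall u, k u = h (g u)) -> forall q : tensor S U, tmap k q = tmap h (tmap g q).
Proof.
move=> e; elim/tind=> a; rewrite !tmapE /tmapS -map_comp; congr tp.
by apply: eq_map => x /=; rewrite e.
Qed.

Section Mu.
Variables (R : comPzRingType) (S T : ralg R) (u : ralg_hom S T).
Local Notation iT := (ralg_str T).

Lemma semil_u : @semil R S T T^o u.
Proof. by split=> [x y|r x]; rewrite ?rmorphD // rmorphM rah_str. Qed.

Definition mu (q : tensor S T) : T := @tv R S T T^o u (qval q).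
Lemma muE a : mu (tp a) = \sum_(x <- a) x.2 * u x.1.
Proof. by rewrite /mu (tv_qv a semil_u). Qed.

Lemma muB : zmod_morphism mu.
Proof.
elim/tind=> a; elim/tind=> b; rewrite -tpB !muE big_cat /= big_map -sumrN.
by congr (_ + _); apply: eq_bigr => x _; rewrite mulNr.
Qed.
Lemma muM : monoid_morphism mu.
Proof.
split; first by rewrite -tp1 muE big_seq1 /= rmorph1 mulr1.
elim/tind=> a; elim/tind=> b; rewrite -tpM !muE /tmul big_allpairs_dep mulr_suml.
apply: eq_bigr => x _; rewrite mulr_sumr; apply: eq_bigr => y _.
by rewrite /= rmorphM mulrACA.
Qed.
HB.instance Definition _ := GRing.isZmodMorphism.Build (tensor S T) T mu muB.
HB.instance Definition _ := GRing.isMonoidMorphism.Build (tensor S T) T mu muM.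

Lemma mu_str r : mu (jR S T r) = iT r.
Proof. by rewrite /jR muE big_seq1 /= rmorph1 mulr1. Qed.
Definition mu_hom : ralg_hom (tensorA S T) T := @RAlgHom R (tensorA S T) T mu mu_str.

Lemma mu_jS s : mu (jS T s) = u s.
Proof. by rewrite /jS muE big_seq1 /= mul1r. Qed.
Lemma mu_jU t : mu (jU S t) = t.
Proof. by rewrite /jU muE big_seq1 /= rmorph1 mulr1. Qed.
End Mu.

Lemma addf0 (V W : zmodType) (f : V -> W) :
  (forall x y, f (x + y) = f x + f y) -> f 0 = 0.
Proof.
move=> h; apply/eqP; rewrite -(addrI (f 0) (_ : f 0 + f 0 = f 0 + 0)) //.
by rewrite -h !addr0.
Qed.

Lemma addf_sum (V W : zmodType) (f : V -> W) :
  (forall x y, f (x + y) = f x + f y) ->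
  forall I (r : seq I) (F : I -> V), f (\sum_(i <- r) F i) = \sum_(i <- r) f (F i).
Proof.
move=> h I r F; elim: r => [|i r IH]; first by rewrite !big_nil (addf0 h).
by rewrite !big_cons h IH.
Qed.

Section NMod.
Variables (R : comPzRingType) (S : ralg R).
Definition Nobj (U : ralg R) : lmodType U := tensor S U.
Definition Nmap (U U' : ralg R) (g : ralg_hom U U') (x : Nobj U) : Nobj U' := tmap g x.
Lemma Nadd U U' (g : ralg_hom U U') x y : Nmap g (x + y) = Nmap g x + Nmap g y.
Proof. exact: rmorphD. Qed.
Lemma Nscale U U' (g : ralg_hom U U') (s : U) x : Nmap g (s *: x) = g s *: Nmap g x.
Proof. exact: tmapZ. Qed.
Lemma Nid U (g : ralg_hom U U) : (forall s, g s = s) -> forall x, Nmap g x = x.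
Proof. exact: tmap_id. Qed.
Lemma Ncomp U U' U'' (g : ralg_hom U U') (h : ralg_hom U' U'') (k : ralg_hom U U'') :
  (forall s, k s = h (g s)) -> forall x, Nmap k x = Nmap h (Nmap g x).
Proof. exact: tmap_comp. Qed.
Definition Nmod : rmodule R := @RModule R Nobj Nmap Nadd Nscale Nid Ncomp.

Lemma Nmod_qc : quasi_coherent Nmod.
Proof.
move=> U P phi hD hZ.
pose phi0 := fun s : S => phi (jS (ralgR R) s).
have hphi0 : @semil R S U P phi0.
  split=> [x y|r x]; first by rewrite /phi0 rmorphD hD.
  rewrite /phi0 (jSM S (ralgR R)).2 jS_str.
  have -> : jR S (ralgR R) r = jU S (r : ralgR R) by [].
  by rewrite -tscale_mul hZ.
pose psi := fun q : tensor S U => tv phi0 (qval q).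
have psiE : forall a, psi (tp a) = tv phi0 a by move=> a; exact: (tv_qv a hphi0).
have phiE : forall a, phi (tp a) = \sum_(x <- a) ralg_str U x.2 *: phi0 x.1.
  move=> a; rewrite tp_sum (addf_sum hD); apply: eq_bigr => x _.
  by rewrite hZ.
exists psi; split.
- by elim/tind=> a; elim/tind=> b; rewrite -tpD !psiE tv_cat.
- by move=> s; elim/tind=> a; rewrite -tpZ !psiE tv_sc.
- by elim/tind=> a; rewrite /= /Nmap tmapE psiE phiE /tv big_map.
- move=> psi' hD' hZ' hc; elim/tind=> a.
  rewrite psiE tp_sum (addf_sum hD') /tv; apply: eq_bigr => x _.
  rewrite hZ'; congr (_ *: _); rewrite -[tp [:: (x.1, 1)]]/(jS U x.1) -(tmap_jS (str_hom U)).
  exact: hc.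
Qed.
End NMod.

Lemma addfN (V W : zmodType) (f : V -> W) :
  (forall x y, f (x + y) = f x + f y) -> forall x, f (- x) = - f x.
Proof.
move=> h x; apply/eqP; rewrite -addr_eq0 -h addNr; apply/eqP; exact: addf0 h.
Qed.
Lemma addfB (V W : zmodType) (f : V -> W) :
  (forall x y, f (x + y) = f x + f y) -> forall x y, f (x - y) = f x - f y.
Proof. by move=> h x y; rewrite h (addfN h). Qed.

Definition hcomp (R : comPzRingType) (A B C : ralg R) (g : ralg_hom A B)
  (h : ralg_hom B C) : ralg_hom A C :=
  @RAlgHom R A C (rah_fun h \o rah_fun g) (fun r => etrans (congr1 h (rah_str g r)) (rah_str h r)).

Section Coker.
Variables (R : comPzRingType) (M N : rmodule R) (f : rmorph M N).

Lemma fadd U : forall x y, f U (x + y) = f U x + f U y.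
Proof. exact: rmor_add. Qed.

Definition imsub (U : ralg R) : submod (rm_obj N U).
Proof.
refine (@SubMod U (rm_obj N U) (fun x => exists m, f U m = x) _ _ _).
- by exists 0; exact: (addf0 (@fadd U)).
- by move=> x y [m <-] [m' <-]; exists (m + m'); rewrite fadd.
- by move=> a x [m <-]; exists (a *: m); rewrite rmor_scale.
Defined.

Definition Cobj (U : ralg R) : lmodType U := qmod (imsub U).
Definition Cmap (U U' : ralg R) (g : ralg_hom U U') (c : Cobj U) : Cobj U' :=
  qproj (imsub U') (rm_map N g (qval c)).

Lemma NmapB (U U' : ralg R) (g : ralg_hom U U') x y :
  rm_map N g (x - y) = rm_map N g x - rm_map N g y.
Proof. by apply: addfB => a b; apply: rm_add. Qed.

Lemma CmapE (U U' : ralg R) (g : ralg_hom U U') x :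
  Cmap g (qproj (imsub U) x) = qproj (imsub U') (rm_map N g x).
Proof.
rewrite /Cmap; apply/pqE.
have [m hm] : qe (imsub U) (qval (qproj (imsub U) x)) x by apply: qv.
by exists (rm_map M g m); rewrite rmor_nat hm NmapB.
Qed.

Lemma Cadd U U' (g : ralg_hom U U') x y : Cmap g (x + y) = Cmap g x + Cmap g y.
Proof.
elim/qind: x => x; elim/qind: y => y.
by rewrite -!/(qproj _ _) -qprojD !CmapE rm_add qprojD.
Qed.
Lemma Cscale U U' (g : ralg_hom U U') (s : U) x : Cmap g (s *: x) = g s *: Cmap g x.
Proof.
elim/qind: x => x.
by rewrite -!/(qproj _ _) -qprojZ !CmapE rm_scale qprojZ.
Qed.
Lemma Cid U (g : ralg_hom U U) : (forall s, g s = s) -> forall x, Cmap g x = x.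
Proof. by move=> h; elim/qind=> x; rewrite -!/(qproj _ _) CmapE rm_id. Qed.
Lemma Ccomp U U' U'' (g : ralg_hom U U') (h : ralg_hom U' U'') (k : ralg_hom U U'') :
  (forall s, k s = h (g s)) -> forall x, Cmap k x = Cmap h (Cmap g x).
Proof. by move=> e; elim/qind=> x; rewrite -!/(qproj _ _) !CmapE (rm_comp e). Qed.
Definition Cmod : rmodule R := @RModule R Cobj Cmap Cadd Cscale Cid Ccomp.

Definition pmp (U : ralg R) (x : rm_obj N U) : rm_obj Cmod U := qproj (imsub U) x.
Lemma pmp_add (U : ralg R) x y : pmp (x + y) = pmp x + pmp y :> rm_obj Cmod U.
Proof. exact: qprojD. Qed.
Lemma pmp_scale (U : ralg R) (s : U) x : pmp (s *: x) = s *: pmp x :> rm_obj Cmod U.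
Proof. exact: qprojZ. Qed.
Lemma pmp_nat U U' (g : ralg_hom U U') x : pmp (rm_map N g x) = rm_map Cmod g (pmp x).
Proof. by rewrite /= CmapE. Qed.
Definition pmor : rmorph N Cmod := @RMorph R N Cmod pmp pmp_add pmp_scale pmp_nat.

Lemma pmor_coker : is_coker f pmor.
Proof.
move=> U; split; first exact: qproj_surj.
by move=> x; rewrite /= /pmp qproj_eq0.
Qed.
End Coker.

Section Back.
Variables (R : comPzRingType) (M : rmodule R) (S : ralg R) (w w' : dual_elt M S).

Definition fdiff (U : ralg R) (y : rm_obj M U) : rm_obj (Nmod S) U :=
  dw w (jS_hom S U) (rm_map M (jU_hom S U) y) - dw w' (jS_hom S U) (rm_map M (jU_hom S U) y).

Lemma fdiff_add U x y : fdiff (x + y) = fdiff x + fdiff y :> rm_obj (Nmod S) U.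
Proof. by rewrite /fdiff rm_add !dw_add opprD addrACA. Qed.
Lemma fdiff_scale (U : ralg R) (s : U) x : fdiff (s *: x) = s *: fdiff x :> rm_obj (Nmod S) U.
Proof.
rewrite /fdiff rm_scale !dw_scale -mulrBr.
by rewrite [s *: _]tscale_mul.
Qed.
Lemma fdiff_nat U U' (g : ralg_hom U U') x :
  fdiff (rm_map M g x) = rm_map (Nmod S) g (fdiff x).
Proof.
rewrite /fdiff /= /Nmap rmorphB.
have e1 : forall s, (hcomp g (jU_hom S U')) s = (tmap_hom S g) (jU_hom S U s).
  by move=> s; rewrite /= tmap_jU.
have e2 : forall s, (hcomp g (jU_hom S U')) s = (jU_hom S U') (g s) by [].
rewrite -(rm_comp e2) (rm_comp e1).
have e3 : forall s, (tmap_hom S g) (jS_hom S U s) = jS_hom S U' s.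
  by move=> s; rewrite /= tmap_jS.
by rewrite !(dw_nat _ e3).
Qed.
Definition fmor : rmorph M (Nmod S) := @RMorph R M (Nmod S) fdiff fdiff_add fdiff_scale fdiff_nat.
End Back.

Lemma back (R : comPzRingType) (M : rmodule R) :
  (forall (N : rmodule R), quasi_coherent N ->
   forall (f : rmorph M N) (C : rmodule R) (p : rmorph N C),
     is_coker f p -> quasi_coherent C) -> dually_separated M.
Proof.
move=> H S w w' hw T u x.
pose f := fmor w w'.
have qcC := H _ (@Nmod_qc R S) f _ _ (pmor_coker f).
have fR0 : forall m : rm_obj M (ralgR R), f (ralgR R) m = 0.
  move=> m; rewrite /= /fdiff.
  have e0 : forall s, (jS_hom S (ralgR R)) (id_hom S s) = jS_hom S (ralgR R) s by [].
  have e1 : forall r, (jU_hom S (ralgR R)) r = (jS_hom S (ralgR R)) (str_hom S r).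
    by move=> r; rewrite /= jS_str.
  rewrite (rm_comp e1) !(dw_nat _ e0).
  by have := hw m; rewrite /dual_res => ->; rewrite subrr.
have qvalq : forall y : rm_obj (Nmod S) (ralgR R), qval (qproj (imsub f (ralgR R)) y) = y.
  move=> y; have [m hm] : qe (imsub f (ralgR R)) (qval (qproj (imsub f (ralgR R)) y)) y by apply: qv.
  by apply/eqP; rewrite -subr_eq0 -hm fR0.
pose phi := fun c : rm_obj (Cmod f) (ralgR R) => Nmap (str_hom T) (qval c) : rm_obj (Nmod S) T.
have phiE : forall y, phi (qproj (imsub f (ralgR R)) y) = Nmap (str_hom T) y.
  by move=> y; rewrite /phi qvalq.
have [psi [psiD psiZ psiE _]] := qcC T _ phi
  (ltac:(elim/qind=> y; elim/qind=> y'; rewrite -!/(qproj _ _) -qprojD !phiE; exact: Nadd))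
  (ltac:(move=> r; elim/qind=> y; rewrite -!/(qproj _ _) -qprojZ !phiE; exact: Nscale)).
have [psi0 [_ _ _ uniq]] := @Nmod_qc R S T _ (Nmap (str_hom T))
  (fun y y' => Nadd _ y y') (fun r y => @Nscale R S (ralgR R) T (str_hom T) r y).
have idE : forall n, n = psi0 n.
  by apply: uniq.
pose th := fun n : rm_obj (Nmod S) T => psi (pmp f n).
have thE : forall n, th n = psi0 n.
  apply: uniq => [y y'|s y|m]; rewrite /th.
  - by rewrite pmp_add psiD.
  - by rewrite pmp_scale psiZ.
  - by rewrite pmp_nat psiE /pmp phiE.
have fT0 : f T x = 0.
  have hk : pmp f (f T x) = 0 by apply/(pmor_coker f T).2; exists x.
  rewrite (idE (f T x)) -thE /th hk; exact: addf0 psiD.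
have e4 : forall s, (mu_hom u) (jS_hom S T s) = u s by move=> s; exact: mu_jS.
have e5 : forall t, (id_hom T) t = (mu_hom u) (jU_hom S T t) by move=> t; rewrite /= mu_jU.
have xE : x = rm_map M (mu_hom u) (rm_map M (jU_hom S T) x).
  by rewrite -(rm_comp e5) rm_id.
rewrite xE !(dw_nat _ e4); apply/eqP; rewrite -subr_eq0 -rmorphB.
by move: fT0; rewrite /= /fdiff => ->; rewrite rmorph0.
Qed.

Definition sq (S : comPzRingType) (P : lmodType S) : Type := (S * P)%type.
Section Sq.
Variables (S : comPzRingType) (P : lmodType S).
HB.instance Definition _ := GRing.Zmodule.on (sq P).
Definition sqmul (a b : sq P) : sq P := (a.1 * b.1, a.1 *: b.2 + b.1 *: a.2).
Definition sqone : sq P := (1, 0).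
Lemma sqmulA : associative sqmul.
Proof.
move=> [a x] [b y] [c z]; rewrite /sqmul /=; congr (_, _); first by rewrite mulrA.
by rewrite !scalerDr !scalerA addrA [c * a]mulrC [c * b]mulrC.
Qed.
Lemma sqmulC : commutative sqmul.
Proof. by move=> [a x] [b y]; rewrite /sqmul /= mulrC addrC. Qed.
Lemma sqmul1 : left_id sqone sqmul.
Proof. by move=> [a x]; rewrite /sqmul /= mul1r scale1r scaler0 addr0. Qed.
Lemma sqmulDl : left_distributive sqmul +%R.
Proof.
move=> [a x] [b y] [c z]; rewrite /sqmul /=.
by congr (_, _); rewrite ?mulrDl // scalerDl scalerDr addrACA.
Qed.
HB.instance Definition _ := GRing.Zmodule_isComPzRing.Build (sq P) sqmulA sqmulC sqmul1 sqmulDl.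

Lemma sq_mulE (a b : sq P) : a * b = (a.1 * b.1, a.1 *: b.2 + b.1 *: a.2).
Proof. by []. Qed.
Lemma sq_addE (a b : sq P) : a + b = (a.1 + b.1, a.2 + b.2).
Proof. by []. Qed.
Lemma sq_oneE : (1 : sq P) = (1, 0). Proof. by []. Qed.
Lemma sq_zeroE : (0 : sq P) = (0, 0). Proof. by []. Qed.
Lemma sq_oppE (a : sq P) : - a = (- a.1, - a.2). Proof. by []. Qed.

Definition sqi (s : S) : sq P := (s, 0).
Lemma sqiB : zmod_morphism sqi.
Proof. by move=> x y; rewrite /sqi sq_addE sq_oppE /= oppr0 addr0. Qed.
Lemma sqiM : monoid_morphism sqi.
Proof. by split=> // x y; rewrite /sqi sq_mulE /= !scaler0 addr0. Qed.
HB.instance Definition _ := GRing.isZmodMorphism.Build S (sq P) sqi sqiB.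
HB.instance Definition _ := GRing.isMonoidMorphism.Build S (sq P) sqi sqiM.
End Sq.

Section SqAlg.
Variables (R : comPzRingType) (S : ralg R) (P : lmodType S).
Definition sq_str (r : R) : sq P := sqi P (ralg_str S r).
Lemma sq_strB : zmod_morphism sq_str.
Proof. by move=> x y; rewrite /sq_str rmorphB (sqiB P). Qed.
Lemma sq_strM : monoid_morphism sq_str.
Proof. by split; [rewrite /sq_str rmorph1 | move=> x y; rewrite /sq_str rmorphM (sqiM P).2]. Qed.
HB.instance Definition _ := GRing.isZmodMorphism.Build R (sq P) sq_str sq_strB.
HB.instance Definition _ := GRing.isMonoidMorphism.Build R (sq P) sq_str sq_strM.
Definition sqA : ralg R := @RAlg R (sq P) sq_str.
Definition sqi_hom : ralg_hom S sqA := @RAlgHom R S sqA (sqi P) (fun r => erefl).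
End SqAlg.

Lemma qc_uniq (R : comPzRingType) (N : rmodule R) (hN : quasi_coherent N)
  (U : ralg R) (Q : lmodType U) (g : rm_obj N (ralgR R) -> Q)
  (gD : forall x y, g (x + y) = g x + g y)
  (gZ : forall (r : R) x, g (r *: x) = ralg_str U r *: g x)
  (F1 F2 : rm_obj N U -> Q) :
  (forall x y, F1 (x + y) = F1 x + F1 y) -> (forall (s : U) x, F1 (s *: x) = s *: F1 x) ->
  (forall m, F1 (rm_map N (str_hom U) m) = g m) ->
  (forall x y, F2 (x + y) = F2 x + F2 y) -> (forall (s : U) x, F2 (s *: x) = s *: F2 x) ->
  (forall m, F2 (rm_map N (str_hom U) m) = g m) ->
  forall x, F1 x = F2 x.
Proof.
move=> h1 h2 h3 h4 h5 h6 x; have [psi [_ _ _ u]] := hN U Q g gD gZ.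
by rewrite (u F1) // (u F2).
Qed.

Section Fwd.
Variables (R : comPzRingType) (M N C : rmodule R) (f : rmorph M N) (p : rmorph N C).
Hypotheses (hds : dually_separated M) (hN : quasi_coherent N) (hC : is_coker f p).
Variables (S : ralg R) (P : lmodType S) (phi : rm_obj C (ralgR R) -> P).
Hypotheses (hD : forall x y, phi (x + y) = phi x + phi y)
  (hZ : forall (r : R) x, phi (r *: x) = ralg_str S r *: phi x).

Local Notation S' := (sqA P).
Definition eps (x : P) : sq P := (0, x).

Lemma pD (U : ralg R) x y : p U (x + y) = p U x + p U y. Proof. exact: rmor_add. Qed.
Lemma fD (U : ralg R) x y : f U (x + y) = f U x + f U y. Proof. exact: rmor_add. Qed.

Lemma epsD x y : eps (x + y) = eps x + eps y.
Proof. by rewrite /eps sq_addE /= addr0. Qed.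
Lemma eps_str r q : eps (ralg_str S r *: q) = ralg_str S' r * eps q.
Proof. by rewrite /eps sq_mulE /= mulr0 scaler0 addr0. Qed.

Definition phiv (T : ralg R) (v : ralg_hom S' T) (n : rm_obj N (ralgR R)) : T^o :=
  v (eps (phi (p _ n))).
Lemma phivD (T : ralg R) (v : ralg_hom S' T) x y : @phiv T v (x + y) = phiv v x + phiv v y.
Proof. by rewrite /phiv pD hD epsD rmorphD. Qed.
Lemma phivZ (T : ralg R) (v : ralg_hom S' T) (r : R) x : @phiv T v (r *: x) = ralg_str T r *: phiv v x.
Proof. by rewrite /phiv rmor_scale hZ eps_str rmorphM rah_str. Qed.

Definition psiT (T : ralg R) (v : ralg_hom S' T) : rm_obj N T -> T^o :=
  proj1_sig (constructive_indefinite_description _ (@hN T T^o (phiv v) (@phivD T v) (@phivZ T v))).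
Lemma psiT_spec (T : ralg R) (v : ralg_hom S' T) :
  [/\ (forall x y, psiT v (x + y) = psiT v x + psiT v y),
      (forall (s : T) x, psiT v (s *: x) = s *: psiT v x),
      (forall m, psiT v (rm_map N (str_hom T) m) = phiv v m) &
      (forall psi' : rm_obj N T -> T^o,
          (forall x y, psi' (x + y) = psi' x + psi' y) ->
          (forall (s : T) x, psi' (s *: x) = s *: psi' x) ->
          (forall m, psi' (rm_map N (str_hom T) m) = phiv v m) ->
          forall x, psi' x = psiT v x)].
Proof. rewrite /psiT; case: constructive_indefinite_description => ? h; exact: h. Qed.

Definition dwf (T : ralg R) (v : ralg_hom S' T) (y : rm_obj M T) : T := psiT v (f T y).
Lemma dwf_add (T : ralg R) (v : ralg_hom S' T) x y : @dwf T v (x + y) = dwf v x + dwf v y.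
Proof. by rewrite /dwf fD; case: (psiT_spec v) => ->. Qed.
Lemma dwf_scale (T : ralg R) (v : ralg_hom S' T) (t : T) x : @dwf T v (t *: x) = t * dwf v x.
Proof. by rewrite /dwf rmor_scale; case: (psiT_spec v) => _ ->. Qed.
Lemma dwf_nat (T T' : ralg R) (v : ralg_hom S' T) (v' : ralg_hom S' T') (g : ralg_hom T T') :
  (forall s, g (v s) = v' s) -> forall x, dwf v' (rm_map M g x) = g (dwf v x).
Proof.
move=> hg x; rewrite /dwf rmor_nat.
pose g' := fun m : rm_obj N (ralgR R) => (phiv v' m : via (rah_fun g) T'^o).
have g'D : forall x y, g' (x + y) = g' x + g' y by move=> a b; exact: phivD.
have g'Z : forall (r : R) x, g' (r *: x) = ralg_str T r *: g' x.
  by move=> r a; rewrite /g' phivZ viaZ rah_str.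
case: (psiT_spec v) => D1 Z1 C1 _; case: (psiT_spec v') => D2 Z2 C2 _.
apply: (qc_uniq hN g'D g'Z (F1 := fun n => psiT v' (rm_map N g n) : via (rah_fun g) T'^o)
   (F2 := fun n => g (psiT v n) : via (rah_fun g) T'^o)).
- by move=> a b; rewrite /= rm_add D2.
- by move=> s a; rewrite /= rm_scale Z2.
- move=> m /=; have e : forall r, (str_hom T') r = g (str_hom T r) by move=> r; rewrite /= rah_str.
  by rewrite -(rm_comp e) C2.
- by move=> a b; rewrite /= D1 rmorphD.
- by move=> s a; rewrite /= Z1 rmorphM.
- by move=> m /=; rewrite C1 /phiv hg.
Qed.
Definition wdual : dual_elt M S' := @DualElt R M S' dwf dwf_add dwf_scale dwf_nat.

Definition wzero : dual_elt M S'.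
Proof.
refine (@DualElt R M S' (fun T _ _ => 0) _ _ _).
- by move=> *; rewrite addr0.
- by move=> *; rewrite mulr0.
- by move=> *; rewrite rmorph0.
Defined.

Lemma phi0 : phi 0 = 0.
Proof. exact: (addf0 hD). Qed.

Lemma wdual_res m : dual_res wdual m = dual_res wzero m.
Proof.
rewrite /dual_res /= /dwf rmor_nat; case: (psiT_spec (id_hom S')) => _ _ -> _.
rewrite /phiv. have -> : p _ (f _ m) = 0 by apply/(hC _).2; exists m.
by rewrite phi0.
Qed.

Lemma wdual0 (T : ralg R) (v : ralg_hom S' T) y : dwf (T:=T) v y = 0.
Proof. exact: (hds wdual_res). Qed.

Definition psiN := proj1_sig (constructive_indefinite_description _
  (@hN S P (fun n => phi (p _ n)) (fun x y => etrans (congr1 phi (pD x y)) (hD _ _))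
      (fun r x => etrans (congr1 phi (rmor_scale _ _ _)) (hZ _ _)))).
Lemma psiN_spec :
  [/\ (forall x y, psiN (x + y) = psiN x + psiN y),
      (forall (s : S) x, psiN (s *: x) = s *: psiN x),
      (forall m, psiN (rm_map N (str_hom S) m) = phi (p _ m)) &
      (forall psi' : rm_obj N S -> P,
          (forall x y, psi' (x + y) = psi' x + psi' y) ->
          (forall (s : S) x, psi' (s *: x) = s *: psi' x) ->
          (forall m, psi' (rm_map N (str_hom S) m) = phi (p _ m)) ->
          forall x, psi' x = psiN x)].
Proof. rewrite /psiN; case: constructive_indefinite_description => ? h; exact: h. Qed.

Lemma psiN_f x : psiN (f S x) = 0.
Proof.
case: psiN_spec => DN ZN CN _.
case: (psiT_spec (id_hom S')) => D1 Z1 C1 _.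
pose i := sqi_hom P.
pose g' := fun m : rm_obj N (ralgR R) => (eps (phi (p _ m)) : via (rah_fun i) (sq P)^o).
have g'D : forall x y, g' (x + y) = g' x + g' y.
  by move=> a b; rewrite /g' pD hD /eps sq_addE /= addr0.
have g'Z : forall (r : R) x, g' (r *: x) = ralg_str S r *: g' x.
  by move=> r a; rewrite /g' rmor_scale hZ eps_str viaZ.
have key : forall n, psiT (id_hom S') (rm_map N i n) = eps (psiN n).
  apply: (qc_uniq hN g'D g'Z (F1 := fun n => psiT (id_hom S') (rm_map N i n) : via (rah_fun i) (sq P)^o)
     (F2 := fun n => eps (psiN n) : via (rah_fun i) (sq P)^o)).
  - by move=> a b; rewrite /= rm_add D1.
  - by move=> s a; rewrite /= rm_scale Z1.
  - move=> m /=; have e : forall r, (str_hom S') r = i (str_hom S r) by [].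
    by rewrite -(rm_comp e) C1.
  - by move=> a b; rewrite /= DN /eps sq_addE /= addr0.
  - move=> s a; rewrite /= ZN viaZ; change (eps (s *: psiN a) = sqi P s * eps (psiN a)).
    by rewrite sq_mulE /eps /= mulr0 scaler0 addr0.
  - by move=> m /=; rewrite CN.
have := key (f S x); rewrite -rmor_nat -/(dwf _ _) wdual0 => h.
exact: (congr1 snd (esym h)).
Qed.

Lemma fwd_qc : exists psi : rm_obj C S -> P,
  [/\ (forall x y, psi (x + y) = psi x + psi y),
      (forall (s : S) x, psi (s *: x) = s *: psi x),
      (forall m, psi (rm_map C (str_hom S) m) = phi m) &
      (forall psi' : rm_obj C S -> P,
          (forall x y, psi' (x + y) = psi' x + psi' y) ->
          (forall (s : S) x, psi' (s *: x) = s *: psi' x) ->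
          (forall m, psi' (rm_map C (str_hom S) m) = phi m) ->
          forall x, psi' x = psi x)].
Proof.
case: psiN_spec => DN ZN CN UN.
pose pk c := proj1_sig (constructive_indefinite_description _ ((hC S).1 c)).
have pkP : forall c, p S (pk c) = c.
  by move=> c; rewrite /pk; case: constructive_indefinite_description.
pose psi c := psiN (pk c).
have psiP : forall n, psi (p S n) = psiN n.
  move=> n; rewrite /psi.
  have : p S (pk (p S n) - n) = 0 by rewrite (addfB (@pD S)) pkP subrr.
  case/(hC S).2 => m hm.
  by apply/eqP; rewrite -subr_eq0 -(addfB DN) -hm psiN_f.
have pind : forall c, exists n, p S n = c := (hC S).1.
exists psi; split.
- by move=> c c'; have [n <-] := pind c; have [n' <-] := pind c'; rewrite -pD !psiP DN.
- by move=> s c; have [n <-] := pind c; rewrite -rmor_scale !psiP ZN.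
- by move=> c; have [n <-] := (hC (ralgR R)).1 c; rewrite -rmor_nat psiP CN.
- move=> psi' h1 h2 h3 c; have [n <-] := pind c; rewrite psiP.
  apply: (UN (fun n => psi' (p S n))).
  + by move=> a b; rewrite pD h1.
  + by move=> s a; rewrite rmor_scale h2.
  + by move=> m; rewrite rmor_nat h3.
Qed.
End Fwd.

Lemma fwd (R : comPzRingType) (M : rmodule R) : dually_separated M ->
  forall (N : rmodule R), quasi_coherent N ->
   forall (f : rmorph M N) (C : rmodule R) (p : rmorph N C),
     is_coker f p -> quasi_coherent C.
Proof.
move=> hds N hN f C p hC S P phi hD hZ.
exact: (fwd_qc hds hN hC hD hZ).
Qed.


Theorem lemma3p12 (R : comPzRingType) (M : rmodule R) :
  dually_separated M <->
  (forall (N : rmodule R), quasi_coherent N ->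
   forall (f : rmorph M N) (C : rmodule R) (p : rmorph N C),
     is_coker f p -> quasi_coherent C).
Proof.
split; [exact: fwd | exact: back].
Qed.
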